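(* Let $d\ge 2$, $n\ge 2$ and $R=\mathbb{C}[x_0,\dots,x_n]$. A tuple $(f_{ij}: 0\le i<j\le n)\in R_d^{\binom{n+1}{2}}$ is the tuple of determinantal equations of the eigenscheme of a polynomial in $R_d$, i.e. there exists $f\in R_d$ with $f_{ij}=x_i\partial_jf-x_j\partial_if$ for all $0\le i<j\le n$, if and only if $$x_if_{jk}-x_jf_{ik}+x_kf_{ij}=0\quad\text{and}\quad \partial_if_{jk}-\partial_jf_{ik}+\partial_kf_{ij}=0$$ for every $0\le i<j<k\le n$.
   Context: $\partial_i$ denotes the partial derivative $\partial/\partial x_i$. For a symmetric tensor identified with $f\in R_d$, the eigenscheme $E(f)\subseteq\mathbb{P}^n$ is defined by the $2\times 2$ minors $x_i\partial_jf-x_j\partial_if$ of $\begin{pmatrix} x_0&\dots&x_n\\ \partial_0f&\dots&\partial_nf\end{pmatrix}$, called its determinantal equations. *)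

(* Defs.v *)
From HB Require Import structures.
From mathcomp Require Import all_boot all_order all_algebra.
From mathcomp Require Import mpoly.
From mathcomp Require Import complex.
From mathcomp Require Import Rstruct.
From Stdlib Require Rdefinitions.
Set Implicit Arguments.
Unset Strict Implicit.
Unset Printing Implicit Defensive.
Import GRing.Theory.
Local Open Scope ring_scope.

Definition CC : fieldType := complex Rdefinitions.R.

Notation Rpoly n := {mpoly CC[n.+1]}.

Definition det_eq (n : nat) (f : Rpoly n) (i j : 'I_n.+1) : Rpoly n :=
  'X_i * mderiv j f - 'X_j * mderiv i f.

(* Main.v *)
Require Import Defs.
From HB Require Import structures.
From mathcomp Require Import all_boot all_order all_algebra.
From mathcomp Require Import mpoly ring zify complex Rstruct.
Import GRing.Theory Num.Theory.
Local Open Scope ring_scope.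

Section Aux.
Variable n : nat.
Local Notation P := (Rpoly n).
Local Notation I := ('I_n.+1).

Lemma mderiv_X (i j : I) : mderiv i ('X_j : P) = (j == i)%:R.
Proof.
rewrite mderivX mnm1E; case: eqP => [->|_]; last by rewrite scale0r.
have -> : (U_(i) - U_(i) = 0)%MM by apply/mnmP => l; rewrite !mnmE subnn.
by rewrite mpolyX0 scale1r.
Qed.

Lemma homog_mderiv k (p : P) i : p \is k.-homog -> mderiv i p \is k.-1.-homog.
Proof.
move=> /dhomogP hp; apply/dhomogP => m; rewrite mcoeff_msupp mcoeff_mderiv.
have [->|nz] := eqVneq (p@_(m + U_(i))%MM) 0; first by rewrite mul0rn eqxx.
move=> _; have := hp (m + U_(i))%MM; rewrite mcoeff_msupp nz => /(_ isT).
move=> <-; have h1 := mdegD m U_(i); have h2 := mdeg1 i; rewrite [X in X.-1]h1 h2 addn1. done.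
Qed.

Lemma euler_mono (m : 'X_{1..n.+1}) :
  \sum_(i : I) 'X_i * mderiv i ('X_[m] : P) = 'X_[m] *+ mdeg m.
Proof.
rewrite mdegE -sumrMnr; apply: eq_bigr => i _.
rewrite mderivX -scalerAr scaler_nat.
have [->|pos] := posnP (m i); first by rewrite !mulr0n.
congr (_ *+ _); rewrite -mpolyXD; congr 'X_[_].
rewrite addmC submK //; apply/mnm_lepP => j; rewrite mnm1E.
by case: eqP => [<-|]; [exact: pos | ].
Qed.

Lemma euler k (p : P) : p \is k.-homog ->
  \sum_(i : I) 'X_i * mderiv i p = p *+ k.
Proof.
move=> hp.
transitivity (\sum_(i : I) \sum_(m <- msupp p) p@_m *: ('X_i * mderiv i 'X_[m])).
  apply: eq_bigr => i _; rewrite {1}[p]mpolyE raddf_sum /= mulr_sumr.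
  by apply: eq_bigr => m _; rewrite mderivZ scalerAr.
rewrite exchange_big /= [in RHS](mpolyE p) -sumrMnl; apply: eq_big_seq => m mp.
by rewrite -scaler_sumr euler_mono (dhomog_mf hp mp) scalerMnr.
Qed.


Definition Aexpr (F : I -> I -> P) (i j k : I) : P :=
  'X_i * F j k - 'X_j * F i k + 'X_k * F i j.
Definition Bexpr (F : I -> I -> P) (i j k : I) : P :=
  mderiv i (F j k) - mderiv j (F i k) + mderiv k (F i j).
Definition wedge (G : I -> P) (j k : I) : P := 'X_j * G k - 'X_k * G j.
Definition dd (G : I -> P) (j k : I) : P := mderiv j (G k) - mderiv k (G j).
Definition div (F : I -> I -> P) (j : I) : P := \sum_(i : I) mderiv i (F i j).

Lemma mderivCC (a b : I) (p : P) : mderiv a (mderiv b p) = mderiv b (mderiv a p).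
Proof. by rewrite mderiv_comm. Qed.

Lemma sum_delta (G : I -> P) (j : I) : \sum_(i : I) (j == i)%:R * G i = G j.
Proof.
rewrite (bigD1 j) //= eqxx mul1r big1 ?addr0 // => i /negbTE.
by rewrite eq_sym => ->; rewrite mul0r.
Qed.

Lemma bianchi_wedge G i j k : Bexpr (wedge G) i j k = - Aexpr (dd G) i j k.
Proof.
rewrite /Bexpr /wedge /Aexpr /dd !mderivB !mderivM !mderiv_X.
rewrite [j == i]eq_sym [k == i]eq_sym [k == j]eq_sym.
ring.
Qed.

Lemma bianchi_dd G i j k : Bexpr (dd G) i j k = 0.
Proof.
rewrite /Bexpr /dd !mderivB (mderivCC j i (G k)) (mderivCC k i (G j)) (mderivCC k j (G i)).
ring.
Qed.

Lemma koszul2 e F : (forall j k, F k j = - F j k) ->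
  (forall j k, F j k \is e.-homog) -> (forall i j k, Aexpr F i j k = 0) ->
  forall j k, F j k *+ (n.+1 + e) = F j k *+ 2 + wedge (div F) j k.
Proof.
move=> hs hh hA j k.
have H0 : \sum_(i : I) mderiv i (Aexpr F i j k) = 0.
  by rewrite big1 // => i _; rewrite hA mderiv0.
have E : \sum_(i : I) mderiv i (Aexpr F i j k) =
   \sum_(i : I) (F j k + 'X_i * mderiv i (F j k)) - \sum_(i : I) ((j == i)%:R * F i k)
   - 'X_j * div F k + \sum_(i : I) ((k == i)%:R * F i j) + 'X_k * div F j.
  rewrite /div !mulr_sumr -!sumrB -!big_split /=.
  apply: eq_bigr => i _; rewrite /Aexpr !(mderivD, mderivB, mderivN, mderivM) !mderiv_X eqxx.
  rewrite mul1r; ring.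
rewrite E big_split /= sumr_const card_ord (@euler e (F j k) (hh j k)) !sum_delta (hs j k) in H0.
rewrite /wedge; apply/eqP; rewrite -subr_eq0 -H0 mulrnDr; apply/eqP; ring.
Qed.


Lemma natCC_neq0 k : (0 < k)%N -> (k%:R : CC) != 0.
Proof.
case: k => // k _; have := (@pnatr_eq0 (complex Rdefinitions.R) k.+1).
by rewrite /CC /= => ->.
Qed.

Lemma scale_invMn k (p : P) : (0 < k)%N -> (k%:R : CC)^-1 *: (p *+ k) = p.
Proof.
move=> hk; rewrite -scalerMnr scalerMnl -mulr_natr mulVf ?scale1r //.
exact: natCC_neq0.
Qed.

Lemma sum_delta' (G : I -> P) (j : I) : \sum_(i : I) (i == j)%:R * G i = G j.
Proof. by rewrite -(sum_delta G j); apply: eq_bigr => i _; rewrite eq_sym. Qed.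

Lemma X_homog (j : I) : ('X_j : P) \is 1.-homog.
Proof. by rewrite dhomogX /= mdeg1. Qed.

Lemma homogXr k (p : P) (j : I) : p \is k.-homog -> p * 'X_j \is k.+1.-homog.
Proof. by move=> hp; have := dhomogM hp (X_homog j); rewrite addn1. Qed.

Lemma homogXl k (p : P) (j : I) : p \is k.-homog -> 'X_j * p \is k.+1.-homog.
Proof. by move=> hp; rewrite mulrC homogXr. Qed.

Lemma mderiv_homog0 (p : P) i : p \is 0.-homog -> mderiv i p = 0.
Proof.
move=> hp; apply/mpolyP => m; rewrite mcoeff_mderiv mcoeff0.
rewrite (dhomog_nemf_coeff hp) ?mul0rn //.
have h1 := mdegD m U_(i); have h2 := mdeg1 i.
by rewrite /= h1 h2 addn1.
Qed.

Lemma closeL (hn : (2 <= n)%N) m : forall G : I -> P,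
  (forall j, G j \is m.-homog) -> (forall i j k, Aexpr (dd G) i j k = 0) ->
  exists f u, f \is m.+1.-homog /\ forall j, G j = mderiv j f + u * 'X_j.
Proof.
elim/ltn_ind: m => m IH G hG hA.
pose H := dd G.
have hHs : forall j k, H k j = - H j k by move=> j k; rewrite /H /dd opprB.
have hHh : forall j k, H j k \is m.-1.-homog.
  by move=> j k; rewrite /H /dd rpredB // homog_mderiv.
have Kz := @koszul2 m.-1 H hHs hHh hA.
pose K := div H.
pose c := (n.-1 + m.-1)%N.
have hK : forall j k, wedge K j k = H j k *+ c.
  move=> j k; have := Kz j k.
  have -> : (n.+1 + m.-1 = c + 2)%N by rewrite /c; case: n hn => // n' _; lia.
  rewrite mulrnDr => e; apply/(addrI (H j k *+ 2)); rewrite -e addrC.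
  done.
have [v [hv hvK]] : exists v : P, (forall j, v * 'X_j \is m.-homog) /\
    forall j k, wedge K j k = wedge (fun l => mderiv l v) j k.
  case: (ltnP m 2) => hm.
    exists 0; split; first by move=> j; rewrite mul0r rpred0.
    have K0 : forall l, K l = 0.
      move=> l; rewrite /K /div big1 // => i _; apply: mderiv_homog0.
      by have := hHh i l; have -> : m.-1 = 0%N by lia.
    by move=> j k; rewrite /wedge !K0 !mderiv0 !mulr0 subrr.
  have hKh : forall l, K l \is m.-2.-homog.
    move=> l; rewrite /K /div rpred_sum // => i _.
    exact: homog_mderiv.
  have hKA : forall i j k, Aexpr (dd K) i j k = 0.
    move=> i j k; apply/eqP; rewrite -oppr_eq0 -bianchi_wedge.
    have -> : Bexpr (wedge K) i j k = Bexpr H i j k *+ c.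
      by rewrite /Bexpr !hK !mderivMn; ring.
    by rewrite /H bianchi_dd mul0rn.
  have [f [u [hf hfu]]] := IH m.-2 ltac:(lia) K hKh hKA.
  exists f; split.
    move=> j; have := @homogXr _ _ j hf.
    by have -> : m.-2.+2 = m by lia.
  by move=> j k; rewrite /wedge !hfu; ring.
pose Pp := fun j => G j *+ c + v * 'X_j.
have hPh : forall j, Pp j \is m.-homog by move=> j; rewrite /Pp rpredD ?rpredMn ?hG ?hv.
have closed : forall j k, mderiv j (Pp k) = mderiv k (Pp j).
  move=> j k; have e1 := hK j k; have e2 := hvK j k.
  apply/eqP; rewrite -subr_eq0.
  have -> : mderiv j (Pp k) - mderiv k (Pp j) =
     H j k *+ c - wedge (fun l => mderiv l v) j k.
    rewrite /Pp /H /dd /wedge !(mderivD, mderivMn, mderivM, mderiv_X).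
    rewrite [k == j]eq_sym; ring.
  by rewrite -e2 e1 subrr.
pose f0 := \sum_(i : I) 'X_i * Pp i.
have hf0 : forall j, mderiv j f0 = Pp j *+ m.+1.
  move=> j; rewrite /f0 raddf_sum /=.
  under eq_bigr do rewrite mderivM mderiv_X closed.
  by rewrite big_split /= sum_delta' (@euler m (Pp j) (hPh j)) mulrSr addrC.
have hf0h : f0 \is m.+1.-homog.
  by rewrite /f0 rpred_sum // => i _; apply: homogXl.
have cn0 : (c%:R : CC) != 0 by apply: natCC_neq0; rewrite /c addn_gt0; apply/orP; left; rewrite -subn1 subn_gt0.
have mn0 : (m.+1%:R : CC) != 0 by apply: natCC_neq0.
exists ((c%:R : CC)^-1 *: ((m.+1%:R : CC)^-1 *: f0)), (- ((c%:R : CC)^-1 *: v)); split.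
  by rewrite !rpredZ.
move=> j; rewrite !mderivZ hf0 scale_invMn //.
rewrite mulNr -scalerAl -scalerBr /Pp addrK scale_invMn //.
by rewrite /c addn_gt0; apply/orP; left; rewrite -subn1 subn_gt0.
Qed.


Lemma half_zero (p : P) : p = - p -> p = 0.
Proof.
move=> h; have h2 : p *+ 2 = 0 by rewrite mulr2n {2}h subrr.
by rewrite -(@scale_invMn 2 p isT) h2 scaler0.
Qed.

Lemma alt_zero (T : I -> I -> I -> P) :
  (forall i j k, T j i k = - T i j k) -> (forall i j k, T i k j = - T i j k) ->
  (forall i j k : I, (i < j)%N -> (j < k)%N -> T i j k = 0) -> forall i j k, T i j k = 0.
Proof.
move=> s1 s2 hs.
have Z : forall a b c : I, (a < b)%N -> (b < c)%N ->
   [/\ T a b c = 0, T b a c = 0 & T a c b = 0] /\ [/\ T b c a = 0, T c a b = 0 & T c b a = 0].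
  move=> a b c hab hbc; have h0 := hs a b c hab hbc.
  have h1 : T b a c = 0 by rewrite s1 h0 oppr0.
  have h2 : T a c b = 0 by rewrite s2 h0 oppr0.
  have h3 : T b c a = 0 by rewrite s2 h1 oppr0.
  have h4 : T c a b = 0 by rewrite s1 h2 oppr0.
  have h5 : T c b a = 0 by rewrite s2 h4 oppr0.
  by [].
move=> i j k.
case: (ltngtP i j) => [h1|h1|/val_inj e1]; case: (ltngtP j k) => [h2|h2|/val_inj e2];
  case: (ltngtP i k) => [h3|h3|/val_inj e3]; try subst;
  try solve [apply: half_zero; apply: s1 | apply: half_zero; apply: s2 |
             rewrite s2; apply/eqP; rewrite oppr_eq0; apply/eqP; apply: half_zero; apply: s1];
  first [ case: (Z _ _ _ h1 h2) => [[? ? ?] [? ? ?]] | case: (Z _ _ _ h2 h1) => [[? ? ?] [? ? ?]] | case: (Z _ _ _ h1 h3) => [[? ? ?] [? ? ?]]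
        | case: (Z _ _ _ h3 h1) => [[? ? ?] [? ? ?]] | case: (Z _ _ _ h2 h3) => [[? ? ?] [? ? ?]] | case: (Z _ _ _ h3 h2) => [[? ? ?] [? ? ?]]
        | idtac ]; try done.
all: exfalso; lia.
Qed.

End Aux.

Arguments Aexpr {n}.
Arguments Bexpr {n}.
Arguments wedge {n}.
Arguments dd {n}.
Arguments div {n}.
Arguments bianchi_wedge {n}.
Arguments bianchi_dd {n}.
Arguments mderivCC {n}.
Arguments alt_zero {n}.
Arguments closeL {n}.
Arguments scale_invMn {n}.
Arguments homog_mderiv {n}.

Theorem theorem3p3 (d n : nat) (hd : (2 <= d)%N) (hn : (2 <= n)%N)
  (F : 'I_n.+1 -> 'I_n.+1 -> Rpoly n)
  (hF : forall i j : 'I_n.+1, (i < j)%N -> F i j \is d.-homog) :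
  (exists f : Rpoly n, f \is d.-homog /\
     forall i j : 'I_n.+1, (i < j)%N -> F i j = det_eq f i j)
  <->
  (forall i j k : 'I_n.+1, (i < j)%N -> (j < k)%N ->
     'X_i * F j k - 'X_j * F i k + 'X_k * F i j = 0 /\
     mderiv i (F j k) - mderiv j (F i k) + mderiv k (F i j) = 0).
Proof.
split.
  case=> f [hf hFf] i j k hij hjk.
  have hik : (i < k)%N := ltn_trans hij hjk.
  rewrite (hFf j k hjk) (hFf i k hik) (hFf i j hij); split.
    by rewrite /det_eq; ring.
  change (Bexpr (wedge (fun l => mderiv l f)) i j k = 0).
  rewrite bianchi_wedge.
  have z : forall a b, dd (fun l => mderiv l f) a b = 0.
    by move=> a b; rewrite /dd mderivCC subrr.
  by rewrite /Aexpr !z !mulr0 !subrr addr0 oppr0.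
move=> hAB.
pose Fe := fun j k : 'I_n.+1 => if (j < k)%N then F j k else if (k < j)%N then - F k j else 0.
have hs : forall j k, Fe k j = - Fe j k.
  move=> j k; rewrite /Fe; case: (ltngtP j k) => [h|h|/val_inj e].
  - by [].
  - by rewrite opprK.
  - by subst; rewrite oppr0.
have hh : forall j k, Fe j k \is d.-homog.
  move=> j k; rewrite /Fe; case: ifP => h1; first exact: hF.
  by case: ifP => h2; [rewrite rpredN; apply: hF | apply: rpred0].
have hAe : forall i j k, Aexpr Fe i j k = 0.
  apply: alt_zero.
  - by move=> i j k; rewrite /Aexpr (hs i j); ring.
  - by move=> i j k; rewrite /Aexpr (hs j k); ring.
  - move=> i j k hij hjk; have hik : (i < k)%N := ltn_trans hij hjk.
    by rewrite /Aexpr /Fe hij hjk hik; case: (hAB i j k hij hjk).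
have hBe : forall i j k, Bexpr Fe i j k = 0.
  apply: alt_zero.
  - by move=> i j k; rewrite /Bexpr (hs i j) mderivN; ring.
  - by move=> i j k; rewrite /Bexpr (hs j k) mderivN; ring.
  - move=> i j k hij hjk; have hik : (i < k)%N := ltn_trans hij hjk.
    by rewrite /Bexpr /Fe hij hjk hik; case: (hAB i j k hij hjk).
have Kz := @koszul2 n d Fe hs hh hAe.
pose g := div Fe.
pose c := (n.-1 + d)%N.
have hc : (0 < c)%N by rewrite /c addn_gt0; apply/orP; left; rewrite -subn1 subn_gt0.
have hK : forall j k, wedge g j k = Fe j k *+ c.
  move=> j k; have := Kz j k.
  have -> : (n.+1 + d = c + 2)%N by rewrite /c -subn1; lia.
  rewrite mulrnDr => e; apply/(addrI (Fe j k *+ 2)); rewrite -e addrC.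
  done.
have hgh : forall j, g j \is d.-1.-homog.
  by move=> j; rewrite /g /div rpred_sum // => i _; apply: homog_mderiv.
have hgA : forall i j k, Aexpr (dd g) i j k = 0.
  move=> i j k; apply/eqP; rewrite -oppr_eq0 -bianchi_wedge.
  have -> : Bexpr (wedge g) i j k = Bexpr Fe i j k *+ c.
    by rewrite /Bexpr !hK !mderivMn; ring.
  by rewrite hBe mul0rn.
have [f [u [hf hfu]]] := @closeL n hn d.-1 g hgh hgA.
exists ((c%:R : CC)^-1 *: f); split.
  by rewrite rpredZ //; have <- : d.-1.+1 = d by lia.
move=> i j hij.
have -> : F i j = Fe i j by rewrite /Fe hij.
rewrite -(@scale_invMn n c (Fe i j) hc) -hK /wedge !hfu /det_eq !mderivZ -!scalerAr -scalerBr.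
congr (_ *: _); ring.
Qed.
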